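(* Let $G_{\mathrm{inv}}$ be the $q$-grammar with master variables $S=\{x,y\}$, rule $x_j\mapsto q^jy_jx_{j+1}$, $y_j\mapsto q^jy_jx_{j+1}$ ($j\ge0$), and order AIO, and let $D$ be its $q$-derivative. Let $\phi$ be the evaluation with $\phi(x_j)=x$, $\phi(y_j)=y$ for all $j\ge0$ ($x,y$ commuting indeterminates). Then for all $n\ge1$, \[ \phi\big(D^n(x_0)\big)=A^{\mathrm{inv}}_n(q;x,y):=\sum_{\sigma\in\mathfrak{S}_n}q^{\operatorname{inv}(\sigma)}x^{\operatorname{asc}(\sigma)}y^{\operatorname{des}(\sigma)}. \]
   Context: Let $\mathbb{K}$ be a commutative ring with unity and characteristic zero, $q$ an indeterminate. For a set $S$ of master variables, $\mathbb{S}=\{s_i:s\in S,\ i\in\{0,1,2,\dots\}\}$ is a set of non-commuting variables, $F(\mathbb{S})$ the free group on $\mathbb{S}$ and $\mathbb{E}=\mathbb{K}[q][F(\mathbb{S})]$ its group algebra. A rule $R$ assigns to each $s_i$ an element $R(s_i)\in\mathbb{E}$, extended by $R(s_i^{-1})=-s_i^{-1}R(s_i)s_{i+1}^{-1}$. The up-arrow $\uparrow$ is the linear map replacing each letter $s_i^{\pm1}$ of a word by $s_{i+1}^{\pm1}$. An order rewrites each word by permuting its letters (extended linearly); AIO stably reorders the letters according to the position of their underlying variable in the sequence $x_0,y_0,x_1,y_1,x_2,y_2,\dots$. A $q$-grammar is a triple $(S,R,\rho)$; its $q$-derivative is the $\mathbb{K}[q]$-linear map $D$ with $D(w_1\cdots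 w_n)=\sum_{j=1}^n\rho\big(w_1\cdots w_{j-1}R(w_j)\uparrow(w_{j+1}\cdots w_n)\big)$ for letters $w_j\in\mathbb{S}\cup\mathbb{S}^{-1}$, $D^0=\mathrm{id}$, $D^k=D\circ D^{k-1}$. An evaluation sends each $s_i$ to an element of a commutative ring containing $\mathbb{K}[q]$ and extends to a $\mathbb{K}[q]$-linear ring morphism with $\phi(s_i^{-1})=\phi(s_i)^{-1}$. For $\sigma\in\mathfrak{S}_n$ with $\sigma_0=\sigma_{n+1}=0$, $0\le i\le n$ is a descent if $\sigma_i>\sigma_{i+1}$, an ascent otherwise; $\operatorname{des},\operatorname{asc}$ count them; $\operatorname{inv}(\sigma)=\#\{(i,j):1\le i<j\le n,\ \sigma_i>\sigma_j\}$. *)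

(* Defs.v *)
From HB Require Import structures.
From mathcomp Require Import all_boot all_order all_algebra all_fingroup.
Set Implicit Arguments. Unset Strict Implicit. Unset Printing Implicit Defensive.
Import Order.TTheory GRing.Theory Num.Theory.
Local Open Scope ring_scope.

Inductive mvar := mx | my.

(* A letter s_i^{+-1}: ((s, i), inv) where inv = true means s_i^{-1}. *)
Definition letter := ((mvar * nat) * bool)%type.
Definition lvar (l : letter) : mvar := l.1.1.
Definition lidx (l : letter) : nat := l.1.2.
Definition linv (l : letter) : bool := l.2.

Definition word := seq letter.

(* Elements of E = K[q][F(S)], represented as formal K[q]-linear
   combinations (lists of (coefficient, word)). *)
Definition qelt (K : comRingType) := seq ({poly K} * word).

Definition qrule (K : comRingType) := mvar -> nat -> qelt K.

Definition up_letter (l : letter) : letter := ((lvar l, (lidx l).+1), linv l).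
Definition upw (w : word) : word := map up_letter w.

Definition rule_letter (K : comRingType) (R : qrule K) (l : letter) : qelt K :=
  if linv l then
    [seq (- p.1, ((lvar l, lidx l), true) :: p.2 ++ [:: ((lvar l, (lidx l).+1), true)])
    | p <- R (lvar l) (lidx l)]
  else R (lvar l) (lidx l).

Definition order := word -> word.

(* AIO: stable reordering by position of the underlying variable in
   x_0, y_0, x_1, y_1, ... (mathcomp's [sort] is a stable merge sort). *)
Definition aio_key (l : letter) : nat :=
  (lidx l).*2 + (match lvar l with mx => 0 | my => 1 end)%N.
Definition AIO : order := sort (fun a b => (aio_key a <= aio_key b)%N).

Definition dummy_letter : letter := ((mx, 0%N), false).

Definition qderiv_word (K : comRingType) (R : qrule K) (rho : order) (w : word)
  : qelt K :=
  flatten [seq [seq (p.1, rho (take j w ++ p.2 ++ upw (drop j.+1 w)))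
               | p <- rule_letter R (nth dummy_letter w j)]
          | j <- iota 0 (size w)].

Definition qderiv (K : comRingType) (R : qrule K) (rho : order) (e : qelt K)
  : qelt K :=
  flatten [seq [seq (c.1 * p.1, p.2) | p <- qderiv_word R rho c.2] | c <- e].

Definition qderiv_iter (K : comRingType) (R : qrule K) (rho : order) (n : nat)
  (e : qelt K) : qelt K := iter n (qderiv R rho) e.

Definition Ginv_rule (K : comRingType) : qrule K :=
  fun _ j => [:: ('X ^+ j, [:: ((my, j), false); ((mx, j.+1), false)])].

(* Target ring K[q][x,y] = {poly {poly {poly K}}}:
   q = innermost variable, x = middle, y = outermost. *)
Definition tgt (K : comRingType) := {poly {poly {poly K}}}.
Definition qT (K : comRingType) : tgt K := ('X%:P)%:P.
Definition xT (K : comRingType) : tgt K := 'X%:P.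
Definition yT (K : comRingType) : tgt K := 'X.
Definition embq (K : comRingType) (c : {poly K}) : tgt K := c%:P%:P.

(* Evaluation phi: phi(x_j) = x, phi(y_j) = y; inverse letters are sent to
   the given values xi, yi. *)
Definition phi_letter (K : comRingType) (xi yi : tgt K) (l : letter) : tgt K :=
  match lvar l, linv l with
  | mx, false => xT K
  | my, false => yT K
  | mx, true => xi
  | my, true => yi
  end.
Definition phi_word (K : comRingType) (xi yi : tgt K) (w : word) : tgt K :=
  \prod_(l <- w) phi_letter xi yi l.
Definition phi (K : comRingType) (xi yi : tgt K) (e : qelt K) : tgt K :=
  \sum_(p <- e) embq p.1 * phi_word xi yi p.2.

Definition x0 (K : comRingType) : qelt K := [:: (1, [:: ((mx, 0%N), false)])].

(* Permutation statistics; sigma_i := sigma(i-1)+1 for 1 <= i <= n,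
   sigma_0 = sigma_{n+1} = 0. *)
Definition pval (n : nat) (s : 'S_n) (i : nat) : nat :=
  if i is i'.+1 then
    (if @insub _ (fun k => (k < n)%N) 'I_n i' is Some k then (s k).+1 else 0%N)
  else 0%N.

Definition des (n : nat) (s : 'S_n) : nat :=
  count (fun i => (pval s i.+1 < pval s i)%N) (iota 0 n.+1).
Definition asc (n : nat) (s : 'S_n) : nat :=
  count (fun i => ~~ (pval s i.+1 < pval s i)%N) (iota 0 n.+1).
Definition inv (n : nat) (s : 'S_n) : nat :=
  #|[set ij : 'I_n * 'I_n | (ij.1 < ij.2)%N && (s ij.2 < s ij.1)%N]|.

Definition Ainv (K : comRingType) (n : nat) : tgt K :=
  \sum_(s : 'S_n) qT K ^+ inv s * xT K ^+ asc s * yT K ^+ des s.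

(* Main.v *)
Require Import Defs.
From HB Require Import structures.
From mathcomp Require Import all_boot all_order all_algebra all_fingroup.
Import GRing.Theory.
Local Open Scope ring_scope.

Section G.
Variable K : comRingType.
Variables xi yi : tgt K.

Definition sc (a : {poly K}) (e : qelt K) : qelt K := [seq (a * c.1, c.2) | c <- e].
Notation D := (qderiv (Ginv_rule K) AIO).

Lemma qderiv_cat e1 e2 : D (e1 ++ e2) = D e1 ++ D e2.
Proof. by rewrite /qderiv map_cat flatten_cat. Qed.

Lemma qderiv_sc a e : D (sc a e) = sc a (D e).
Proof.
elim: e => [//|c e IH] /=.
rewrite /qderiv /= -/(qderiv _ _ e) -/(qderiv _ _ (sc a e)) IH /sc map_cat -map_comp.
congr (_ ++ _); apply: eq_map => p /=; by rewrite mulrA.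
Qed.

Lemma iter_cat k e1 e2 : iter k D (e1 ++ e2) = iter k D e1 ++ iter k D e2.
Proof. by elim: k => //= k ->; rewrite qderiv_cat. Qed.

Lemma iter_sc k a e : iter k D (sc a e) = sc a (iter k D e).
Proof. by elim: k => //= k ->; rewrite qderiv_sc. Qed.

Lemma phi_cat e1 e2 : phi xi yi (e1 ++ e2) = phi xi yi e1 + phi xi yi e2.
Proof. by rewrite /phi big_cat. Qed.

Lemma phi_sc a e : phi xi yi (sc a e) = embq a * phi xi yi e.
Proof.
rewrite /phi /sc big_map mulr_sumr; apply: eq_bigr => c _.
by rewrite /embq !rmorphM /= mulrA.
Qed.

Definition Psi k (w : word) := phi xi yi (iter k D [:: (1, w)]).

Lemma phi_lin k e : phi xi yi (iter k D e) = \sum_(c <- e) embq c.1 * Psi k c.2.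
Proof.
elim: e => [|c e IH].
  rewrite big_nil; have -> : iter k D [::] = [::] by elim: k => //= k ->.
  by rewrite /phi big_nil.
rewrite (_ : c :: e = sc c.1 [:: (1, c.2)] ++ e); last by case: c => a w; rewrite /sc /= mulr1.
by rewrite iter_cat iter_sc phi_cat phi_sc IH /sc big_cat big_seq1 /= mulr1.
Qed.

Fixpoint wg (m : nat) (g : seq mvar) : word :=
  if g is a :: g' then ((a, m), false) :: wg m.+1 g' else [::].

Lemma upw_wg m g : upw (wg m g) = wg m.+1 g.
Proof. by elim: g m => //= a g IH m; rewrite IH. Qed.

Lemma wg_cat m g1 g2 : wg m (g1 ++ g2) = wg m g1 ++ wg (m + size g1) g2.
Proof. by elim: g1 m => [|a g IH] m /=; rewrite ?addn0 // IH addSnnS. Qed.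

Lemma take_wg j m g : take j (wg m g) = wg m (take j g).
Proof. by elim: g j m => [|a g IH] [|j] m //=; rewrite IH. Qed.

Lemma drop_wg j m g : drop j (wg m g) = wg (m + j) (drop j g).
Proof. by elim: g j m => [|a g IH] [|j] m //=; rewrite ?addn0 // IH addSnnS. Qed.

Lemma nth_wg j m g : (j < size g)%N -> nth dummy_letter (wg m g) j = ((nth mx g j, (m + j)%N), false).
Proof. by elim: g j m => [|a g IH] [|j] m //=; rewrite ?addn0 // => /IH ->; rewrite addSnnS. Qed.

Definition leA := (fun a b : letter => (aio_key a <= aio_key b)%N).

Lemma path_wg m g l : (aio_key l <= m.*2)%N -> path leA l (wg m g).
Proof.
elim: g m l => [//|a g IH] m l H /=; apply/andP; split.
  by rewrite /leA /aio_key /=; apply: leq_trans H _; apply: leq_addr.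
apply: IH; rewrite /aio_key /= doubleS; case: a => /=; rewrite ?addn0 ?addn1 //.
by apply: leq_trans (leqnSn _) _.
Qed.

Lemma sorted_wg m g : sorted leA (wg m g).
Proof. case: g => //= a g; apply: path_wg; rewrite /aio_key /= doubleS; case: a => //=.
by rewrite addn0 ltnW // ltnW. by rewrite addn1 ltnW. Qed.

Lemma AIO_wg m g : AIO (wg m g) = wg m g.
Proof. apply: sorted_sort; last exact: sorted_wg. by move=> a b c; apply: leq_trans. Qed.

Definition ins (g : seq mvar) j := take j g ++ my :: mx :: drop j.+1 g.

Lemma qderiv_word_wg g :
  qderiv_word (Ginv_rule K) AIO (wg 0 g) = [seq ('X^j, wg 0 (ins g j)) | j <- iota 0 (size g)].
Proof.
rewrite /qderiv_word.
have -> : size (wg 0 g) = size g by elim: g (0%N) => //= a g IH m; rewrite IH.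
have E : forall s : seq nat, all (fun j => j < size g)%N s ->
  flatten [seq [seq (p.1, AIO (take j (wg 0 g) ++ p.2 ++ upw (drop j.+1 (wg 0 g))))
   | p <- rule_letter (Ginv_rule K) (nth dummy_letter (wg 0 g) j)] | j <- s]
  = [seq ('X^j, wg 0 (ins g j)) | j <- s].
  elim => [//|j s IH] /= /andP[Hj Hs]; rewrite IH //.
  rewrite nth_wg // /rule_letter /= add0n; congr (_ :: _); congr (_, _).
  rewrite take_wg drop_wg upw_wg /ins.
  have E2 : forall r, wg 0 (take j g) ++ wg j r = wg 0 (take j g ++ r).
    by move=> r; rewrite wg_cat size_take Hj.
  rewrite /= !add0n.
  by rewrite (E2 [:: my, mx & drop j.+1 g]) AIO_wg.
apply: E; apply/allP => j; rewrite mem_iota; by case/andP.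
Qed.

Lemma Psi_S k g : Psi k.+1 (wg 0 g) = \sum_(j < size g) embq ('X^j) * Psi k (wg 0 (ins g j)).
Proof.
rewrite /Psi iterSr -/(Psi k) /=.
have -> : D [:: (1, wg 0 g)] = [seq ('X^j, wg 0 (ins g j)) | j <- iota 0 (size g)].
  rewrite /qderiv /= cats0 qderiv_word_wg -map_comp; apply: eq_map => j /=; by rewrite mul1r.
by rewrite phi_lin big_map /= -(big_mkord xpredT (fun j => embq ('X^j) * Psi k (wg 0 (ins g j)))) /index_iota subn0.
Qed.

Definition isx (a : mvar) := if a is mx then true else false.
Definition isy (a : mvar) := if a is my then true else false.

Lemma phi_word_wg m g : phi_word xi yi (wg m g) = xT K ^+ count isx g * yT K ^+ count isy g.
Proof.
elim: g m => [|a g IH] m; first by rewrite /phi_word big_nil mulr1.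
rewrite /phi_word /= big_cons -/(phi_word _ _ _) IH; case: a => /=; rewrite !exprS /=.
  by rewrite add0n mulrA.
by rewrite add0n mulrCA.
Qed.

Lemma Psi0 g : Psi 0 (wg 0 g) = xT K ^+ count isx g * yT K ^+ count isy g.
Proof. by rewrite /Psi /= /phi big_cons big_nil addr0 /embq mul1r phi_word_wg. Qed.

End G.

From mathcomp Require Import zify.
Set Implicit Arguments. Unset Strict Implicit.
Section P.
Variable n : nat.

Lemma pval_ord (s : 'S_n) (o : 'I_n) : Defs.pval s o.+1 = (s o).+1.
Proof. rewrite /Defs.pval insubT /= => [|H]; first exact: ltn_ord. by rewrite (_ : Sub (nat_of_ord o) H = o :> 'I_n) //; apply: val_inj. Qed.

Lemma pval_big (s : 'S_n) k : (n <= k)%N -> Defs.pval s k.+1 = 0%N.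
Proof. by move=> H; rewrite /Defs.pval insubF // ltnNge H. Qed.

Lemma pval_le (s : 'S_n) k : (Defs.pval s k <= n)%N.
Proof.
case: k => [//|k]; case: (ltnP k n) => H.
  by rewrite (pval_ord s (Ordinal H)).
by rewrite pval_big.
Qed.



End P.

Lemma pval_lift n (s : 'S_n) (i : 'I_n.+1) k :
  Defs.pval (lift_perm i ord_max s) k =
  if (k <= i)%N then Defs.pval s k else if k == i.+1 then n.+1 else Defs.pval s k.-1.
Proof.
case: k => [|k]; first by [].
case: (ltnP k n.+1) => Hk; last first.
  have Hik : (i < k)%N by exact: leq_trans (ltn_ord i) Hk.
  rewrite (@pval_big n.+1 (lift_perm i ord_max s) k Hk) ltnNge (ltnW Hik) /= eqSS gtn_eqF //.
  by case: k Hk {Hik} => // k Hk; rewrite pval_big.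
rewrite (@pval_ord n.+1 _ (Ordinal Hk)).
case: (unliftP i (Ordinal Hk)) => [j Ej|Ej].
  have Ek : k = bump i j by exact: (congr1 val Ej).
  rewrite Ej lift_perm_lift.
  rewrite (_ : nat_of_ord (lift ord_max (s j)) = s j); last by rewrite /= /bump leqNgt ltn_ord.
  rewrite Ek /bump; case: (leqP i j) => Hij.
    rewrite add1n ifF; last by apply/negbTE; lia.
    rewrite ifF; last by apply/negbTE; lia.
    by rewrite pval_ord.
  by rewrite add0n ifT ?pval_ord.
have Ek : k = i by exact: (congr1 val Ej).
rewrite Ej lift_perm_id Ek ifF; last by apply/negbTE; lia.
by rewrite eqxx.
Qed.

Definition typ (a b : nat) : mvar := if (b < a)%N then my else mx.
Definition Gl n (s : 'S_n) := [seq typ (Defs.pval s k) (Defs.pval s k.+1) | k <- iota 0 n.+1].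

Lemma Gl_lift n (s : 'S_n) (i : 'I_n.+1) :
  Gl (lift_perm i ord_max s) = take i (Gl s) ++ mx :: my :: drop i.+1 (Gl s).
Proof.
have Hin : (i <= n)%N by rewrite -ltnS ltn_ord.
rewrite /Gl -map_take -map_drop take_iota drop_iota add0n subSS.
rewrite (_ : minn i n.+1 = i); last by lia.
rewrite (_ : n.+2 = i + (n - i).+2)%N; last by lia.
rewrite iotaD add0n map_cat; congr (_ ++ _).
  apply/eq_in_map => k; rewrite mem_iota add0n => /andP[_ Hk].
  rewrite !pval_lift ifT; last by lia.
  by rewrite ifT //.
rewrite -[iota i (n - i).+2]/(nat_of_ord i :: i.+1 :: iota i.+2 (n - i)) map_cons map_cons pval_lift leqnn pval_lift ltnn eqxx.
rewrite pval_lift ifF; last by lia.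
rewrite ifF; last by lia.
have H1 := pval_le s i; have H2 := pval_le s i.+1.
rewrite /typ ifF; last by apply/negbTE; lia.
rewrite (_ : i.+2.-1 = i.+1) // ifT; last by lia.
congr [:: _, _ & _].
rewrite (_ : i.+2 = 1 + i.+1)%N // iotaDl -map_comp.
apply/eq_in_map => k; rewrite mem_iota => /andP[Hk _]; rewrite /comp.
move: (k) Hk => {}k Hk.
rewrite !add1n !pval_lift.
have A1 : (k.+2 <= i)%N = false by lia.
have A2 : (k.+1 <= i)%N = false by lia.
have A3 : (k.+2 == i.+1) = false by lia.
have A4 : (k.+1 == i.+1) = false by lia.
by rewrite A1 A2 A3 A4.
Qed.

Definition gaps n (s : 'S_n) := rev (Gl s).

Lemma size_Gl n (s : 'S_n) : size (Gl s) = n.+1.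
Proof. by rewrite /Gl size_map size_iota. Qed.

Lemma gaps_lift n (s : 'S_n) (i : 'I_n.+1) :
  gaps (lift_perm i ord_max s) = ins (gaps s) (n - i).
Proof.
have Hin : (i <= n)%N by rewrite -ltnS ltn_ord.
rewrite /gaps Gl_lift /ins take_rev drop_rev size_Gl.
rewrite rev_cat /= rev_cons rev_cons -cats1 -cats1 -!catA /=.
rewrite (_ : n.+1 - (n - i) = i.+1)%N; last by lia.
by rewrite (_ : n.+1 - (n - i).+1 = i)%N; last by lia.
Qed.

Lemma count_x n (s : 'S_n) : count isx (gaps s) = Defs.asc s.
Proof.
rewrite /gaps count_rev /Gl count_map /Defs.asc; apply: eq_count => k /=.
by rewrite /typ; case: ifP.
Qed.

Lemma count_y n (s : 'S_n) : count isy (gaps s) = Defs.des s.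
Proof.
rewrite /gaps count_rev /Gl count_map /Defs.des; apply: eq_count => k /=.
by rewrite /typ; case: ifP.
Qed.

Lemma invE n (s : 'S_n) :
  Defs.inv s = (\sum_(a : 'I_n) \sum_(b : 'I_n) ((a < b)%N && (s b < s a)%N : nat))%N.
Proof.
rewrite /Defs.inv -sum1_card big_mkcond /=.
rewrite (pair_big xpredT xpredT (fun a b : 'I_n => ((a < b)%N && (s b < s a)%N : nat))) /=.
by apply: eq_bigr => [[a b]] _; rewrite in_set /=; case: ifP.
Qed.

Lemma sum_ge n (i : nat) : (i <= n)%N -> (\sum_(b < n) (i <= b : nat))%N = (n - i)%N.
Proof.
move=> Hin; rewrite -(big_mkord xpredT (fun b => (i <= b : nat))).
rewrite (@big_cat_nat _ _ _ i) //= big_nat_cond big1 ?add0n; last first.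
  by move=> b /andP[/andP[_ H] _]; rewrite leqNgt H.
rewrite big_nat_cond (eq_bigr (fun _ => 1%N)); last by move=> b /andP[/andP[H _] _]; rewrite H.
by rewrite -big_nat_cond sum_nat_const_nat muln1.
Qed.

Lemma inv_lift n (s : 'S_n) (i : 'I_n.+1) :
  Defs.inv (lift_perm i ord_max s) = (Defs.inv s + (n - i))%N.
Proof.
have Hin : (i <= n)%N by rewrite -ltnS ltn_ord.
have Lv : forall a : 'I_n, nat_of_ord (lift_perm i ord_max s (lift i a)) = s a.
  by move=> a; rewrite lift_perm_lift /= /bump leqNgt ltn_ord.
rewrite !invE (bigD1_ord i) //= addnC; congr (_ + _)%N.
  apply: eq_bigr => a _; rewrite (bigD1_ord i) //= lift_perm_id Lv.
  rewrite (_ : (n < s a)%N = false) ?andbF ?add0n; last by apply/negbTE; rewrite -leqNgt ltnW.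
  apply: eq_bigr => b _; rewrite !Lv /bump.
  by case: (leqP i a); case: (leqP i b) => H1 H2; rewrite ?add1n ?add0n ?ltnS //; do 2 f_equal; lia.
rewrite (bigD1_ord i) //= ltnn add0n -(sum_ge Hin); apply: eq_bigr => b _.
rewrite Lv lift_perm_id ltn_ord andbT /bump.
by case: (leqP i b) => H; rewrite ?add1n ?add0n ?ltnS // ?H; lia.
Qed.

Lemma sum_lift (R : nmodType) n (F : 'S_n.+1 -> R) :
  \sum_(t : 'S_n.+1) F t = \sum_(i : 'I_n.+1) \sum_(s : 'S_n) F (lift_perm i ord_max s).
Proof.
pose f := fun p : 'I_n.+1 * 'S_n => lift_perm p.1 ord_max p.2.
have finj : injective f.
  move=> [i s] [i' s'] E; rewrite /f /= in E.
  have Ei : i = i'.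
    apply: (@perm_inj _ (lift_perm i ord_max s)).
    by rewrite {2}E !lift_perm_id.
  subst i'; congr (_, _); apply/permP => k.
  apply: (@lift_inj _ ord_max).
  by rewrite -(lift_perm_lift i ord_max s) -(lift_perm_lift i ord_max s') E.
have fbij : bijective f.
  apply: inj_card_bij => //.
  by rewrite card_prod card_ord !card_Sn factS.
rewrite (reindex f (onW_bij _ fbij)) /=.
by rewrite (pair_big xpredT xpredT (fun i s => F (lift_perm i ord_max s))).
Qed.

Unset Implicit Arguments.
Lemma main (K : comRingType) (xi yi : tgt K) n k :
  phi xi yi (iter k (qderiv (Ginv_rule K) AIO) (iter n (qderiv (Ginv_rule K) AIO) (x0 K)))
  = \sum_(s : 'S_n) embq ('X^(Defs.inv s)) * @Psi K xi yi k (wg 0 (gaps s)).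
Proof.
elim: n k => [|n IH] k.
  rewrite /= phi_lin /x0 big_seq1 /=.
  rewrite (eq_bigr (fun _ => embq 1 * @Psi K xi yi k [:: (mx, 0%N, false)])).
    by rewrite sumr_const card_Sn.
  move=> s _; rewrite invE !big_ord0 expr0.
  rewrite /gaps /Gl /= /typ /=.
  by [].
rewrite iterS -iterSr IH.
under eq_bigr => s _ do rewrite Psi_S size_rev size_Gl mulr_sumr.
rewrite exchange_big /= sum_lift /=.
rewrite [LHS](reindex_inj rev_ord_inj) /=.
apply: eq_bigr => i _; apply: eq_bigr => s _.
rewrite inv_lift gaps_lift /= subSS mulrA exprD.
by rewrite /embq !rmorphM.
Qed.

Theorem theorem5p4 (K : comRingType)
  (charK0 : forall m : nat, (m%:R : K) = 0 -> m = 0%N)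
  (xi yi : tgt K) (n : nat) :
  (1 <= n)%N ->
  phi xi yi (qderiv_iter (Ginv_rule K) AIO n (x0 K)) = Ainv K n.
Proof.
move=> _.
have := @main K xi yi n 0; rewrite /qderiv_iter /= => ->.
rewrite /Ainv; apply: eq_bigr => s _.
rewrite Psi0 count_x count_y mulrA; congr (_ * _ * _).
by rewrite /embq /qT !rmorphXn.
Qed.
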